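(* Let $p,q,r>0$ with $p+q+r=1$ and $q>p$, and consider the Markov chain on $\{0,1,2,\dots\}$ with $P(0,1)=1$ and, for $n\ge1$, $P(n,n-1)=q$, $P(n,n)=r$, $P(n,n+1)=p$, started at $X_0=0$; let $\mu_t$ be the distribution of $X_t$ and $\nu$ the stationary distribution. Let $$A=\frac{(1+q-p)(q+r)-q}{(1+q-p)(1-2p)},\qquad B=\frac{\frac{p}{q+r}\left(1+\frac{1}{\sqrt{pq}-p}\right)}{\left(1-\sqrt{\frac{p}{q}}\frac{r+(1+q-p)}{2(q+r)}\right)\left(1+\sqrt{\frac{p}{q}}\frac{r-(1+q-p)}{2(q+r)}\right)}.$$ If $\frac{q}{q+r}>r+2\sqrt{pq}$, then for all sufficiently large $t$, $$\|\nu-\mu_t\|_{TV}\ge A\left(\frac{q}{q+r}\right)^t - B\left(r+2\sqrt{pq}\right)^t.$$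
   Context: The stationary distribution is $\nu=\pi/\rho$ where $\pi_0=1$, $\pi_n=p^{n-1}/q^n$ ($n\ge1$) and $\rho=\sum_n\pi_n$. Total variation distance: $\|\nu-\mu\|_{TV}=\frac12\sum_{x}|\nu(x)-\mu(x)|$. *)

(* Defs.v *)
From Stdlib Require Import Reals Lra.
From Coquelicot Require Import Coquelicot.
Open Scope R_scope.

Definition trans (p q r : R) (m n : nat) : R :=
  match m with
  | O => if Nat.eqb n 1 then 1 else 0
  | S k => if Nat.eqb n k then q
           else if Nat.eqb n m then r
           else if Nat.eqb n (S m) then p
           else 0
  end.

(* Distribution of X_t started from X_0 = 0:
   mu_{t+1}(n) = sum_m mu_t(m) P(m,n).  Since P(m,n)=0 for m > n+1,
   the sum over m ranges over 0..n+1 exactly. *)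
Fixpoint mu (p q r : R) (t : nat) (n : nat) : R :=
  match t with
  | O => if Nat.eqb n 0 then 1 else 0
  | S t' => sum_f_R0 (fun m => mu p q r t' m * trans p q r m n) (S n)
  end.

Definition pi_st (p q : R) (n : nat) : R :=
  match n with
  | O => 1
  | S k => p ^ k / q ^ n
  end.

Definition rho (p q : R) : R := Series (pi_st p q).

Definition nu (p q : R) (n : nat) : R := pi_st p q n / rho p q.

Definition tv_dist (f g : nat -> R) : R :=
  / 2 * Series (fun x => Rabs (f x - g x)).

Definition constA (p q r : R) : R :=
  ((1 + q - p) * (q + r) - q) / ((1 + q - p) * (1 - 2 * p)).

Definition constB (p q r : R) : R :=
  (p / (q + r) * (1 + 1 / (sqrt (p * q) - p))) /
  ((1 - sqrt (p / q) * (r + (1 + q - p)) / (2 * (q + r))) *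
   (1 + sqrt (p / q) * (r - (1 + q - p)) / (2 * (q + r)))).

(* Main.v *)
Require Import Defs.
From Stdlib Require Import Reals Lra Psatz Lia.
From Coquelicot Require Import Coquelicot.
Open Scope R_scope.


Lemma exR_plus (a b : nat -> R) : ex_series a -> ex_series b -> ex_series (fun n => a n + b n).
Proof. intros Ha Hb. exact (@ex_series_plus R_AbsRing R_NormedModule a b Ha Hb). Qed.
Lemma exR_scal (c : R) (a : nat -> R) : ex_series a -> ex_series (fun n => c * a n).
Proof. intros Ha. exact (@ex_series_scal_l R_AbsRing R_NormedModule c a Ha). Qed.
Lemma exR_le (a b : nat -> R) : (forall n, Rabs (a n) <= b n) -> ex_series b -> ex_series a.
Proof. intros H Hb. exact (@ex_series_le R_AbsRing R_CompleteNormedModule a b H Hb). Qed.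
Lemma exR_ext (a b : nat -> R) : (forall n, a n = b n) -> ex_series a -> ex_series b.
Proof. intros H Ha. exact (@ex_series_ext R_AbsRing R_NormedModule a b H Ha). Qed.
Lemma isR_scal (c : R) (a : nat -> R) (l : R) :
  is_series a l -> is_series (fun n => c * a n) (c * l).
Proof. intro H. exact (@is_series_scal_l R_AbsRing R_NormedModule c a l H). Qed.

Lemma Series_zero : Series (fun _ => 0) = 0.
Proof.
  rewrite (Series_ext (fun _ => 0) (fun n => 0 * 0)); [|intros; ring].
  rewrite Series_scal_l. ring.
Qed.

Lemma Series_le_gen (a b : nat -> R) :
  ex_series a -> ex_series b -> (forall n, a n <= b n) -> Series a <= Series b.
Proof.
  intros Ha Hb H.
  assert (0 <= Series (fun n => b n - a n)).
  { rewrite <- Series_zero. apply Series_le.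
    - intro n; specialize (H n); lra.
    - apply (exR_ext (fun n => b n + (-1) * a n)).
      + intro n. ring.
      + apply exR_plus; auto. apply exR_scal; auto. }
  rewrite Series_minus in H0; auto. lra.
Qed.

Lemma Series_nonneg' (a : nat -> R) : ex_series a -> (forall n, 0 <= a n) -> 0 <= Series a.
Proof.
  intros Ha H. rewrite <- Series_zero. apply Series_le; auto. intro; split; [lra|auto].
Qed.

Lemma Series_first_le (a : nat -> R) : ex_series a -> (forall n, 0 <= a n) -> a 0%nat <= Series a.
Proof.
  intros Ha H. rewrite (Series_incr_1 a Ha).
  assert (0 <= Series (fun k => a (S k))).
  { apply Series_nonneg'. now apply ex_series_incr_1 in Ha. intro; auto. }
  lra.
Qed.

Lemma isR_decr (a : nat -> R) (l : R) :
  is_series (fun k => a (S k)) (l - a 0%nat) -> is_series a l.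
Proof. intro H. apply is_series_decr_1. exact H. Qed.
Lemma isR_ext (a b : nat -> R) (l : R) : (forall n, a n = b n) -> is_series a l -> is_series b l.
Proof. intros H Ha. exact (@is_series_ext R_AbsRing R_NormedModule a b l H Ha). Qed.

Section Chain.
Variables p q r : R.
Hypotheses (hp : 0 < p) (hq : 0 < q) (hr : 0 < r) (hsum : p + q + r = 1) (hqp : p < q).

Lemma pi_series (x : R) : 0 <= x <= 1 ->
  is_series (fun n => pi_st p q n * x ^ n) (1 + x / (q - p * x)).
Proof.
  intro Hx.
  assert (Hq' : q - p * x > 0) by nra.
  assert (Hg : Rabs (p * x / q) < 1).
  { assert (Hi : 0 < / q) by (apply Rinv_0_lt_compat; lra).
    assert (Hqi : q * / q = 1) by (field; lra).
    unfold Rdiv. rewrite Rabs_pos_eq; nra. }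
  pose proof (isR_scal (x / q) _ _ (is_series_geom _ Hg)) as H.
  apply isR_decr.
  apply (isR_ext (fun k => x / q * (p * x / q) ^ k)).
  - intro k. simpl pi_st. unfold Rdiv. rewrite !Rpow_mult_distr, pow_inv.
    simpl. field. split; [apply pow_nonzero|]; lra.
  - replace (1 + x / (q - p * x) - pi_st p q 0 * x ^ 0)
      with (x / q * / (1 - p * x / q)). exact H.
    simpl. field. lra.
Qed.

Lemma rho_val : rho p q = 1 + 1 / (q - p).
Proof.
  unfold rho. rewrite (Series_ext _ (fun n => pi_st p q n * 1 ^ n)).
  - rewrite (is_series_unique _ _ (pi_series 1 ltac:(lra))). f_equal. field. lra.
  - intro n. rewrite pow1. ring.
Qed.

Lemma rho_pos : 0 < rho p q.
Proof. rewrite rho_val. assert (0 < 1/(q-p)) by (apply Rdiv_lt_0_compat; lra). lra. Qed.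

Lemma pi_pos n : 0 < pi_st p q n.
Proof. destruct n; simpl; [lra|]. apply Rdiv_lt_0_compat; [apply pow_lt; lra|]. apply Rmult_lt_0_compat; [lra|apply pow_lt; lra]. Qed.

Lemma nu_pos n : 0 < nu p q n.
Proof. unfold nu. apply Rdiv_lt_0_compat. apply pi_pos. apply rho_pos. Qed.

Lemma nu_rec0 : nu p q 1 * q = nu p q 0.
Proof. unfold nu. simpl. field. split; [|lra]. apply Rgt_not_eq, rho_pos. Qed.

Lemma nu_rec k : nu p q (S (S k)) * q = nu p q (S k) * p.
Proof.
  unfold nu. simpl pi_st. simpl pow. field.
  pose proof rho_pos. pose proof (pow_lt q k hq).
  repeat split; try lra.
Qed.

Lemma nu_series_x (x : R) : 0 <= x <= 1 ->
  is_series (fun n => nu p q n * x ^ n) ((1 + x / (q - p * x)) / rho p q).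
Proof.
  intro Hx. apply (isR_ext (fun n => / rho p q * (pi_st p q n * x ^ n))).
  - intro n. unfold nu. field. apply Rgt_not_eq, rho_pos.
  - replace ((1 + x / (q - p * x)) / rho p q) with (/ rho p q * (1 + x / (q - p * x))) by (unfold Rdiv; ring).
    apply isR_scal. apply pi_series; auto.
Qed.

Lemma ex_nu : ex_series (nu p q).
Proof.
  exists ((1 + 1 / (q - p * 1)) / rho p q).
  apply (isR_ext (fun n => nu p q n * 1 ^ n)).
  intro n; rewrite pow1; ring. apply nu_series_x; lra.
Qed.

Lemma Series_nu : Series (nu p q) = 1.
Proof.
  rewrite (Series_ext _ (fun n => nu p q n * 1 ^ n)).
  - rewrite (is_series_unique _ _ (nu_series_x 1 ltac:(lra))). rewrite rho_val.
    field. split; lra.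
  - intro n; rewrite pow1; ring.
Qed.

End Chain.

Lemma abs3 (c a b Ma Mb : R) : 0 <= c -> Rabs a <= Ma -> Rabs b <= Mb ->
  Rabs (c * a * b) <= Ma * Mb * c.
Proof.
  intros Hc Ha Hb. rewrite !Rabs_mult, (Rabs_pos_eq _ Hc).
  pose proof (Rabs_pos a). pose proof (Rabs_pos b).
  assert (c * Rabs a <= c * Ma) by nra.
  assert (0 <= c * Ma) by nra.
  nra.
Qed.

Definition bnd (u : nat -> R) := exists M, forall n, Rabs (u n) <= M.

Lemma bnd_const c : bnd (fun _ => c).
Proof. exists (Rabs c). intros; lra. Qed.

Lemma bnd_lin u v c : bnd u -> bnd v -> bnd (fun n => u n + c * v n).
Proof.
  intros [M1 H1] [M2 H2]. exists (M1 + Rabs c * M2). intro n.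
  eapply Rle_trans; [apply Rabs_triang|]. rewrite Rabs_mult.
  pose proof (H1 n). pose proof (H2 n). pose proof (Rabs_pos c). nra.
Qed.

Lemma bnd_ext u v : (forall n, u n = v n) -> bnd u -> bnd v.
Proof. intros E [M H]. exists M. intro n. rewrite <- E. auto. Qed.

Section Hilb.
Variables p q r : R.
Hypotheses (hp : 0 < p) (hq : 0 < q) (hr : 0 < r) (hsum : p + q + r = 1) (hqp : p < q).

Let nu' := nu p q.

Lemma ex_nu_bound (a : nat -> R) (K : R) :
  (forall n, Rabs (a n) <= K * nu p q n) -> ex_series a.
Proof.
  intro H. apply (exR_le a (fun n => K * nu p q n)); auto.
  apply exR_scal. exact (ex_nu p q r hp hq hr hsum hqp).
Qed.

Definition ip (u v : nat -> R) := Series (fun n => nu p q n * u n * v n).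

Lemma ex_ip u v : bnd u -> bnd v -> ex_series (fun n => nu p q n * u n * v n).
Proof.
  intros [M1 H1] [M2 H2]. apply (ex_nu_bound _ (M1 * M2)). intro n.
  apply abs3; auto. left; exact (nu_pos p q r hp hq hr hsum hqp n).
Qed.

Lemma ip_ext u u' v v' : (forall n, u n = u' n) -> (forall n, v n = v' n) -> ip u v = ip u' v'.
Proof. intros E1 E2. unfold ip. apply Series_ext. intro n. rewrite E1, E2. ring. Qed.

Lemma ip_sym u v : ip u v = ip v u.
Proof. unfold ip. apply Series_ext. intro n. ring. Qed.

Lemma ip_lin_l u v w c : bnd u -> bnd v -> bnd w ->
  ip (fun n => u n + c * v n) w = ip u w + c * ip v w.
Proof.
  intros Hu Hv Hw. unfold ip.
  rewrite (Series_ext _ (fun n => nu p q n * u n * w n + c * (nu p q n * v n * w n))).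
  2: intro n; ring.
  rewrite Series_plus. rewrite Series_scal_l. auto.
  apply ex_ip; auto. apply exR_scal, ex_ip; auto.
Qed.

Lemma ip_lin_r u v w c : bnd u -> bnd v -> bnd w ->
  ip w (fun n => u n + c * v n) = ip w u + c * ip w v.
Proof. intros. rewrite ip_sym, ip_lin_l by auto. rewrite (ip_sym u), (ip_sym v). auto. Qed.

Lemma ip_pos u : bnd u -> 0 <= ip u u.
Proof.
  intro Hu. unfold ip. apply Series_nonneg'. apply ex_ip; auto.
  intro n. pose proof (nu_pos p q r hp hq hr hsum hqp n). 
  replace (nu p q n * u n * u n) with (nu p q n * (u n * u n)) by ring.
  apply Rmult_le_pos; [lra|]. apply Rle_0_sqr.
Qed.

Lemma ip_first u : bnd u -> nu p q 0 * (u 0%nat * u 0%nat) <= ip u u.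
Proof.
  intro Hu. unfold ip. 
  replace (nu p q 0 * (u 0%nat * u 0%nat)) with (nu p q 0 * u 0%nat * u 0%nat) by ring.
  apply (Series_first_le (fun n => nu p q n * u n * u n)). apply ex_ip; auto.
  intro n. pose proof (nu_pos p q r hp hq hr hsum hqp n).
  replace (nu p q n * u n * u n) with (nu p q n * (u n * u n)) by ring.
  apply Rmult_le_pos; [lra|]. apply Rle_0_sqr.
Qed.

Lemma ip_one_one : ip (fun _ => 1) (fun _ => 1) = 1.
Proof.
  unfold ip. rewrite (Series_ext _ (nu p q)). exact (Series_nu p q r hp hq hr hsum hqp). intro; ring.
Qed.

End Hilb.

Section Op.
Variables p q r : R.
Hypotheses (hp : 0 < p) (hq : 0 < q) (hr : 0 < r) (hsum : p + q + r = 1) (hqp : p < q).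

Definition Pop (u : nat -> R) (n : nat) : R :=
  match n with O => u 1%nat | S k => q * u k + r * u (S k) + p * u (S (S k)) end.

Lemma Pop_ext u v : (forall n, u n = v n) -> forall n, Pop u n = Pop v n.
Proof. intros E n. destruct n; simpl; rewrite ?E; auto. Qed.

Lemma bnd_Pop u : bnd u -> bnd (Pop u).
Proof.
  intros [M H]. exists M. intro n. destruct n; simpl; auto.
  eapply Rle_trans; [apply Rabs_triang|]. eapply Rle_trans; [apply Rplus_le_compat_r; apply Rabs_triang|].
  rewrite !Rabs_mult, (Rabs_pos_eq q), (Rabs_pos_eq r), (Rabs_pos_eq p) by lra.
  pose proof (H n). pose proof (H (S n)). pose proof (H (S (S n))). nra.
Qed.

Lemma bnd_shift u : bnd u -> bnd (fun n => u (S n)).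
Proof. intros [M H]. exists M. auto. Qed.

Lemma bnd_prev u : bnd u -> bnd (fun n => match n with O => 0 | S k => u k end).
Proof. intros [M H]. exists M. intro n. destruct n; auto. rewrite Rabs_R0. specialize (H 0%nat). pose proof (Rabs_pos (u 0%nat)). lra. Qed.

Lemma bnd_nonneg (u : nat -> R) M : (forall n, Rabs (u n) <= M) -> 0 <= M.
Proof. intro H. specialize (H 0%nat). pose proof (Rabs_pos (u 0%nat)). lra. Qed.

Lemma ex_w (w u v : nat -> R) : (forall n, 0 <= w n <= nu p q n) -> bnd u -> bnd v ->
  ex_series (fun n => w n * u n * v n).
Proof.
  intros Hw [M1 H1] [M2 H2]. apply (ex_nu_bound p q r hp hq hr hsum hqp _ (M1 * M2)).
  intro n. eapply Rle_trans. apply abs3; [apply (Hw n)| apply H1 | apply H2].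
  pose proof (bnd_nonneg _ _ H1). pose proof (bnd_nonneg _ _ H2).
  apply Rmult_le_compat_l; [nra| apply (Hw n)].
Qed.

Definition cc (n : nat) : R := match n with O => nu p q 0 | S k => nu p q (S k) * p end.
Definition wR (n : nat) : R := match n with O => 0 | S k => r * nu p q (S k) end.

Lemma cc_bounds n : 0 <= cc n <= nu p q n.
Proof.
  pose proof (nu_pos p q r hp hq hr hsum hqp n). destruct n; simpl; nra.
Qed.

Lemma wR_bounds n : 0 <= wR n <= nu p q n.
Proof.
  pose proof (nu_pos p q r hp hq hr hsum hqp n). destruct n; simpl; nra.
Qed.

Lemma cc_q k : nu p q (S k) * q = cc k.
Proof.
  destruct k; simpl. apply (nu_rec0 p q r hp hq hr hsum hqp).
  apply (nu_rec p q r hp hq hr hsum hqp).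
Qed.

Lemma wY_bounds n : 0 <= (match n with O => 0 | S k => cc k end) <= nu p q n.
Proof.
  pose proof (nu_pos p q r hp hq hr hsum hqp n). destruct n; [lra|].
  rewrite <- cc_q. nra.
Qed.

Lemma ip_Pop_decomp u v : bnd u -> bnd v ->
  ip p q (Pop u) v = Series (fun n => wR n * u n * v n)
    + Series (fun n => cc n * u (S n) * v n) + Series (fun n => cc n * u n * v (S n)).
Proof.
  intros Hu Hv. unfold ip.
  set (Y := fun n => (match n with O => 0 | S k => cc k end) *
                     (match n with O => 0 | S k => u k end) * v n).
  rewrite (Series_ext _ (fun n => (wR n * u n * v n + cc n * u (S n) * v n) + Y n)).
  2:{ intro n. unfold Y. destruct n; simpl. ring.
      rewrite <- cc_q. ring. }
  rewrite Series_plus, Series_plus.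
  - f_equal. unfold Y. rewrite Series_incr_1_aux by (simpl; ring). apply Series_ext. intro; ring.
  - apply ex_w; auto. apply wR_bounds.
  - apply ex_w; auto. apply cc_bounds. apply bnd_shift; auto.
  - apply exR_plus; apply ex_w; auto. apply wR_bounds. apply cc_bounds. apply bnd_shift; auto.
  - apply ex_w; auto. apply wY_bounds. apply bnd_prev; auto.
Qed.

Lemma Pop_adj u v : bnd u -> bnd v -> ip p q (Pop u) v = ip p q u (Pop v).
Proof.
  intros Hu Hv. rewrite (ip_sym p q u). rewrite !ip_Pop_decomp by auto.
  rewrite (Series_ext (fun n => wR n * u n * v n) (fun n => wR n * v n * u n)) by (intro; ring).
  rewrite (Series_ext (fun n => cc n * u (S n) * v n) (fun n => cc n * v n * u (S n))) by (intro; ring).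
  rewrite (Series_ext (fun n => cc n * u n * v (S n)) (fun n => cc n * v (S n) * u n)) by (intro; ring).
  ring.
Qed.

End Op.

Lemma am_gm_step (p q N M x y s : R) : 0 < N -> 0 < q -> 0 < p -> M * q = N * p -> s * s = p * q -> 0 <= s ->
  Rabs (N * p * x * y) <= s / 2 * (N * (x * x) + M * (y * y)).
Proof.
  intros HN Hq Hp HM Hs Hs0.
  assert (Hk : 0 <= q * (s / 2 * (N * (x * x) + M * (y * y))) - q * Rabs (N * p * x * y)).
  { assert (E1 : q * (s / 2 * (N * (x * x) + M * (y * y))) = s / 2 * N * (q * x * x + p * y * y)).
    { replace (q * (s / 2 * (N * (x * x) + M * (y * y)))) with (s/2 * (N * q * x * x + (M * q) * y * y)) by ring.
      rewrite HM. ring. }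
    rewrite E1. rewrite !Rabs_mult, (Rabs_pos_eq N), (Rabs_pos_eq p) by lra.
    assert (E2 : q * (N * p * Rabs x * Rabs y) = s / 2 * N * (2 * s * Rabs x * Rabs y)).
    { replace (s / 2 * N * (2 * s * Rabs x * Rabs y)) with (N * (s * s) * Rabs x * Rabs y) by field.
      rewrite Hs. ring. }
    rewrite E2.
    assert (Ex : x * x = Rabs x * Rabs x) by (rewrite <- Rabs_mult; symmetry; apply Rabs_pos_eq; apply Rle_0_sqr).
    assert (Ey : y * y = Rabs y * Rabs y) by (rewrite <- Rabs_mult; symmetry; apply Rabs_pos_eq; apply Rle_0_sqr).
    assert (H3 : 0 <= q * (q * x * x + p * y * y - 2 * s * Rabs x * Rabs y)).
    { rewrite !Rmult_assoc, Ex, Ey. rewrite <- !Rmult_assoc.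
      replace (q * (q * Rabs x * Rabs x + p * Rabs y * Rabs y - 2 * s * Rabs x * Rabs y))
        with ((q * Rabs x - s * Rabs y) * (q * Rabs x - s * Rabs y) + (p * q - s * s) * (Rabs y * Rabs y)) by ring.
      rewrite Hs. replace (p * q - p * q) with 0 by ring. rewrite Rmult_0_l, Rplus_0_r. apply Rle_0_sqr. }
    assert (H4 : 0 <= q * x * x + p * y * y - 2 * s * Rabs x * Rabs y) by nra.
    assert (0 <= s / 2 * N) by nra. nra. }
  nra.
Qed.

Section Spec.
Variables p q r : R.
Hypotheses (hp : 0 < p) (hq : 0 < q) (hr : 0 < r) (hsum : p + q + r = 1) (hqp : p < q).


Let ex_ip' := ex_ip p q r hp hq hr hsum hqp.
Let ex_w' := ex_w p q r hp hq hr hsum hqp.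
Let cc_bounds' := cc_bounds p q r hp hq hr hsum hqp.
Let bnd_Pop' := bnd_Pop p q r hp hq hr hsum.
Let ip_lin_l' := ip_lin_l p q r hp hq hr hsum hqp.
Let ip_lin_r' := ip_lin_r p q r hp hq hr hsum hqp.
Let ip_pos' := ip_pos p q r hp hq hr hsum hqp.
Let ip_first' := ip_first p q r hp hq hr hsum hqp.
Let ip_one_one' := ip_one_one p q r hp hq hr hsum hqp.
Let Pop_adj' := Pop_adj p q r hp hq hr hsum hqp.
Let nu_pos' := nu_pos p q r hp hq hr hsum hqp.
Let nu_rec' := nu_rec p q r hp hq hr hsum hqp.
Let ip_Pop_decomp' := ip_Pop_decomp p q r hp hq hr hsum hqp.

Definition bb := r + 2 * sqrt (p * q).

Lemma hyper u : bnd u -> u 0%nat = 0 ->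
  Rabs (ip p q (Pop p q r u) u) <= bb * ip p q u u.
Proof.
  intros Hu H0. rewrite ip_Pop_decomp' by auto.
  set (s := sqrt (p * q)).
  assert (Hs : s * s = p * q) by (apply sqrt_sqrt; nra).
  assert (Hs0 : 0 <= s) by apply sqrt_pos.
  set (Z := fun n => nu p q n * u n * u n).
  assert (HZ : ex_series Z) by (apply ex_ip'; auto).
  assert (HZS : ex_series (fun n => Z (S n))) by (apply ex_series_incr_1 in HZ; exact HZ).
  assert (E0 : Series (fun n => Z (S n)) = ip p q u u).
  { change (Series (fun n => Z (S n)) = Series Z). rewrite (Series_incr_1 Z HZ). unfold Z at 2. rewrite H0. ring. }
  assert (ER : Series (fun n => wR p q r n * u n * u n) = r * ip p q u u).
  { unfold ip. rewrite <- Series_scal_l. apply Series_ext. intro n. destruct n; simpl.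
    rewrite H0. ring. ring. }
  assert (EX : Series (fun n => cc p q n * u n * u (S n)) = Series (fun n => cc p q n * u (S n) * u n)).
  { apply Series_ext; intro; ring. }
  assert (HX : ex_series (fun n => cc p q n * u (S n) * u n)).
  { apply ex_w'; [apply cc_bounds' | apply bnd_shift; auto | auto]. }
  assert (Hb : forall n, Rabs (cc p q n * u (S n) * u n) <= s / 2 * (Z n + Z (S n))).
  { intro n. destruct n.
    - simpl. rewrite H0, Rmult_0_r, Rabs_R0. unfold Z. rewrite H0.
      pose proof (nu_pos' 1). 
      assert (0 <= nu p q 1 * u 1%nat * u 1%nat).
      { replace (nu p q 1 * u 1%nat * u 1%nat) with (nu p q 1 * (u 1%nat * u 1%nat)) by ring.
        apply Rmult_le_pos; [lra|apply Rle_0_sqr]. }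
      nra.
    - simpl cc. unfold Z.
      replace (nu p q (S n) * p * u (S (S n)) * u (S n)) with (nu p q (S n) * p * u (S n) * u (S (S n))) by ring.
      replace (nu p q (S n) * u (S n) * u (S n) + nu p q (S (S n)) * u (S (S n)) * u (S (S n)))
        with (nu p q (S n) * (u (S n) * u (S n)) + nu p q (S (S n)) * (u (S (S n)) * u (S (S n)))) by ring.
      apply (am_gm_step p q); auto. }
  assert (HB : ex_series (fun n => s / 2 * (Z n + Z (S n)))).
  { apply exR_scal. apply exR_plus; auto. }
  assert (EB : Series (fun n => s / 2 * (Z n + Z (S n))) = s * ip p q u u).
  { rewrite Series_scal_l, Series_plus by auto. rewrite E0. fold (ip p q u u). replace (Series Z) with (ip p q u u) by reflexivity. field. }
  assert (U : Series (fun n => cc p q n * u (S n) * u n) <= s * ip p q u u).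
  { rewrite <- EB. apply Series_le_gen; auto. intro n. specialize (Hb n).
    eapply Rle_trans; [apply Rle_abs|exact Hb]. }
  assert (L : - (s * ip p q u u) <= Series (fun n => cc p q n * u (S n) * u n)).
  { rewrite <- EB.
    assert (H : Series (fun n => -1 * (s / 2 * (Z n + Z (S n)))) <= Series (fun n => cc p q n * u (S n) * u n)).
    { apply Series_le_gen; auto. apply exR_scal; auto.
      intro n. specialize (Hb n). pose proof (Rle_abs (- (cc p q n * u (S n) * u n))).
      rewrite Rabs_Ropp in H. lra. }
    rewrite Series_scal_l in H. lra. }
  rewrite ER, EX. unfold bb. fold s.
  pose proof (ip_pos' u Hu).
  apply Rabs_le. split; nra.
Qed.

End Spec.

Lemma ip_scal_l p q u v c : ip p q (fun n => c * u n) v = c * ip p q u v.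
Proof. unfold ip. rewrite <- Series_scal_l. apply Series_ext. intro; ring. Qed.
Lemma ip_scal_r p q u v c : ip p q u (fun n => c * v n) = c * ip p q u v.
Proof. unfold ip. rewrite <- Series_scal_l. apply Series_ext. intro; ring. Qed.

Lemma Pop_lin p q r u v c n : Pop p q r (fun n => u n + c * v n) n = Pop p q r u n + c * Pop p q r v n.
Proof. destruct n; simpl; ring. Qed.

Fixpoint Pit p q r (t : nat) (u : nat -> R) : nat -> R :=
  match t with O => u | S t' => Pop p q r (Pit p q r t' u) end.

Section W.
Variables p q r : R.
Hypotheses (hp : 0 < p) (hq : 0 < q) (hr : 0 < r) (hsum : p + q + r = 1) (hqp : p < q).
Hypothesis (hgap : q / (q + r) > r + 2 * sqrt (p * q)).

Let ex_ip' := ex_ip p q r hp hq hr hsum hqp.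
Let bnd_Pop' := bnd_Pop p q r hp hq hr hsum.
Let ip_lin_l' := ip_lin_l p q r hp hq hr hsum hqp.
Let ip_lin_r' := ip_lin_r p q r hp hq hr hsum hqp.
Let ip_pos' := ip_pos p q r hp hq hr hsum hqp.
Let ip_one_one' := ip_one_one p q r hp hq hr hsum hqp.
Let Pop_adj' := Pop_adj p q r hp hq hr hsum hqp.
Let hyper' := hyper p q r hp hq hr hsum hqp.

Definition aa := q / (q + r).
Definition ff (n : nat) : R := (- aa) ^ n.
Definition oneF (n : nat) : R := 1.

Lemma aa_pos : 0 < aa.
Proof. unfold aa. apply Rdiv_lt_0_compat; lra. Qed.
Lemma aa_lt1 : aa < 1.
Proof. unfold aa. apply (Rmult_lt_reg_r (q + r)); [lra|]. unfold Rdiv. rewrite Rmult_assoc, Rinv_l by lra. lra. Qed.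

Lemma bb_bounds : 0 < bb p q r /\ bb p q r <= 1.
Proof.
  unfold bb. set (s := sqrt (p * q)).
  assert (Hs : s * s = p * q) by (apply sqrt_sqrt; nra).
  assert (Hs0 : 0 <= s) by apply sqrt_pos.
  split. nra. nra.
Qed.

Lemma aa_gt_bb : bb p q r < aa.
Proof. unfold bb, aa. lra. Qed.

Lemma bnd_ff : bnd ff.
Proof.
  exists 1. intro n. unfold ff. rewrite <- RPow_abs. rewrite Rabs_Ropp.
  pose proof aa_pos. pose proof aa_lt1. rewrite Rabs_pos_eq by lra.
  induction n; simpl; [lra|]. pose proof (pow_le aa n ltac:(lra)). nra.
Qed.

Lemma bnd_one : bnd oneF.
Proof. apply bnd_const. Qed.

Lemma Pop_one n : Pop p q r oneF n = oneF n.
Proof. destruct n; unfold oneF; simpl; lra. Qed.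

Lemma Pop_ff n : Pop p q r ff n = - aa * ff n.
Proof.
  destruct n; unfold ff; simpl. ring.
  assert (E : q - r * aa + p * (aa * aa) = aa * aa).
  { unfold aa. replace p with (1 - q - r) by lra. field. lra. }
  replace (q * (- aa) ^ n + r * (- aa * (- aa) ^ n) + p * (- aa * (- aa * (- aa) ^ n)))
    with ((q - r * aa + p * (aa * aa)) * (- aa) ^ n) by ring.
  rewrite E. ring.
Qed.

Lemma ip_one_ff : ip p q oneF ff = 0.
Proof.
  pose proof (Pop_adj' oneF ff bnd_one bnd_ff) as H.
  rewrite (ip_ext p q _ oneF _ ff Pop_one (fun n => eq_refl)) in H.
  rewrite (ip_ext p q oneF oneF _ (fun n => - aa * ff n) (fun n => eq_refl) Pop_ff) in H.
  rewrite ip_scal_r in H. pose proof aa_pos. nra.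
Qed.

Lemma ip_oo : ip p q oneF oneF = 1.
Proof. exact ip_one_one'. Qed.

Definition W (u : nat -> R) := bnd u /\ ip p q u oneF = 0 /\ ip p q u ff = 0.

Lemma W_Pop u : W u -> W (Pop p q r u).
Proof.
  intros [Hb [H1 H2]]. split; [apply bnd_Pop'; auto|split].
  - rewrite Pop_adj' by (auto; apply bnd_one). rewrite (ip_ext p q u u _ oneF (fun n => eq_refl) Pop_one). auto.
  - rewrite Pop_adj' by (auto; apply bnd_ff).
    rewrite (ip_ext p q u u _ (fun n => - aa * ff n) (fun n => eq_refl) Pop_ff).
    rewrite ip_scal_r, H2. ring.
Qed.

Lemma W_lin u v c : W u -> W v -> W (fun n => u n + c * v n).
Proof.
  intros [Hb [H1 H2]] [Hb' [H1' H2']]. split; [apply bnd_lin; auto|split].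
  - rewrite ip_lin_l'; auto. rewrite H1, H1'. ring. apply bnd_one.
  - rewrite ip_lin_l'; auto. rewrite H2, H2'. ring. apply bnd_ff.
Qed.

Lemma ip_expand u1 u2 v1 v2 c e : bnd u1 -> bnd u2 -> bnd v1 -> bnd v2 ->
  ip p q (fun n => u1 n + c * u2 n) (fun n => v1 n + e * v2 n)
  = ip p q u1 v1 + e * ip p q u1 v2 + c * ip p q u2 v1 + c * e * ip p q u2 v2.
Proof.
  intros. rewrite ip_lin_l'; auto. rewrite !ip_lin_r'; auto. ring.
  apply bnd_lin; auto.
Qed.


Lemma W_quad u : W u -> Rabs (ip p q (Pop p q r u) u) <= bb p q r * ip p q u u.
Proof.
  intros [Hb [H1 H2]].
  pose proof bb_bounds as [Hb0 Hb1]. pose proof aa_gt_bb as Hab.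
  pose proof (ip_pos' u Hb) as HU.
  set (u0 := u 0%nat).
  set (y := fun n => u n + (- u0) * oneF n).
  assert (Hy : bnd y) by (apply bnd_lin; auto; apply bnd_one).
  assert (Hy0 : y 0%nat = 0) by (unfold y, oneF, u0; ring).
  pose proof (hyper' y Hy Hy0) as Hup.
  assert (E1 : ip p q (Pop p q r y) y = ip p q (Pop p q r u) u + u0 * u0).
  { rewrite (ip_ext p q _ (fun n => Pop p q r u n + (- u0) * oneF n) y y).
    2:{ intro n. unfold y. rewrite Pop_lin, Pop_one. auto. }
    2:{ intro; auto. }
    unfold y. rewrite ip_expand; auto; try apply bnd_one; try apply bnd_Pop'; auto.
    rewrite (Pop_adj' u oneF) by (auto; apply bnd_one).
    rewrite (ip_ext p q u u _ oneF (fun n => eq_refl) Pop_one).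
    rewrite ip_oo, H1, (ip_sym p q oneF u), H1. ring. }
  assert (E2 : ip p q y y = ip p q u u + u0 * u0).
  { unfold y. rewrite ip_expand; auto; try apply bnd_one.
    rewrite ip_oo, H1, (ip_sym p q oneF u), H1. ring. }
  rewrite E1, E2 in Hup.
  set (z := fun n => u n + (- u0) * ff n).
  assert (Hz : bnd z) by (apply bnd_lin; auto; apply bnd_ff).
  assert (Hz0 : z 0%nat = 0) by (unfold z, ff, u0; simpl; ring).
  pose proof (hyper' z Hz Hz0) as Hlo.
  set (F := ip p q ff ff).
  assert (HF : 0 <= F) by (apply ip_pos'; apply bnd_ff).
  assert (E3 : ip p q (Pop p q r z) z = ip p q (Pop p q r u) u - aa * u0 * u0 * F).
  { rewrite (ip_ext p q _ (fun n => Pop p q r u n + (- u0 * - aa) * ff n) z z).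
    2:{ intro n. unfold z. rewrite Pop_lin, Pop_ff. ring. }
    2:{ intro; auto. }
    unfold z. rewrite ip_expand; auto; try apply bnd_ff; try apply bnd_Pop'; auto.
    rewrite (Pop_adj' u ff) by (auto; apply bnd_ff).
    rewrite (ip_ext p q u u _ (fun n => - aa * ff n) (fun n => eq_refl) Pop_ff).
    rewrite ip_scal_r. rewrite H2, (ip_sym p q ff u), H2. fold F. ring. }
  assert (E4 : ip p q z z = ip p q u u + u0 * u0 * F).
  { unfold z. rewrite ip_expand; auto; try apply bnd_ff.
    rewrite H2, (ip_sym p q ff u), H2. fold F. ring. }
  rewrite E3, E4 in Hlo.
  apply Rabs_le. apply Rabs_le_between in Hup. apply Rabs_le_between in Hlo.
  assert (0 <= u0 * u0) by apply Rle_0_sqr.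
  assert (0 <= u0 * u0 * F) by nra.
  split; nra.
Qed.

Lemma W_contract u : W u -> ip p q (Pop p q r u) (Pop p q r u) <= (bb p q r) ^ 2 * ip p q u u.
Proof.
  intro HW. pose proof HW as [Hb [H1 H2]].
  pose proof bb_bounds as [Hb0 Hb1].
  set (v := Pop p q r u).
  assert (HWv : W v) by (apply W_Pop; auto).
  pose proof HWv as [Hbv _].
  set (b := bb p q r). set (t := / b).
  assert (Ht : t * b = 1). { unfold t, b. apply Rinv_l. lra. }
  assert (Hbp : 0 < b) by (unfold b; lra).
  set (xp := fun n => u n + t * v n).
  set (xm := fun n => u n + (- t) * v n).
  assert (Wp : W xp) by (apply W_lin; auto).
  assert (Wm : W xm) by (apply W_lin; auto).
  pose proof (W_quad xp Wp) as Qp. pose proof (W_quad xm Wm) as Qm.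
  fold b in Qp, Qm.
  assert (Hbv' : bnd (Pop p q r v)) by (apply bnd_Pop'; auto).
  assert (Adj : ip p q (Pop p q r v) u = ip p q v v).
  { rewrite Pop_adj' by auto. apply ip_sym. }
  assert (EQ : forall c, ip p q (Pop p q r (fun n => u n + c * v n)) (fun n => u n + c * v n)
     = ip p q v u + c * ip p q v v + c * ip p q v v + c * c * ip p q (Pop p q r v) v).
  { intro c. rewrite (ip_ext p q _ (fun n => Pop p q r u n + c * Pop p q r v n) _ (fun n => u n + c * v n)).
    2:{ intro n. apply Pop_lin. }  2:{ intro; auto. }
    rewrite ip_expand; auto. fold v. rewrite Adj. ring. }
  assert (EN : forall c, ip p q (fun n => u n + c * v n) (fun n => u n + c * v n)
     = ip p q u u + 2 * c * ip p q u v + c * c * ip p q v v).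
  { intro c. rewrite ip_expand; auto. rewrite (ip_sym p q v u). ring. }
  unfold xp in Qp. unfold xm in Qm. rewrite EQ, EN in Qp, Qm.
  apply Rabs_le_between in Qp. apply Rabs_le_between in Qm.
  fold v. set (V := ip p q v v) in *. set (U := ip p q u u) in *.
  assert (H4 : 4 * t * V <= b * (2 * U + 2 * t * t * V)) by nra.
  assert (H5 := Rmult_le_compat_l b _ _ (Rlt_le _ _ Hbp) H4).
  replace (b * (4 * t * V)) with (4 * V * (t * b)) in H5 by ring.
  replace (b * (b * (2 * U + 2 * t * t * V))) with (2 * b * b * U + 2 * V * (t * b) * (t * b)) in H5 by ring.
  rewrite Ht in H5. simpl. nra.
Qed.

End W.

Lemma sum_zeros (F : nat -> R) k : (forall m, (m <= k)%nat -> F m = 0) -> sum_f_R0 F k = 0.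
Proof.
  induction k; intro H; simpl. apply H; lia.
  rewrite IHk by (intros; apply H; lia). rewrite H by lia. ring.
Qed.

Lemma sum_prefix (F : nat -> R) k : (forall m, (m < k)%nat -> F m = 0) -> sum_f_R0 F k = F k.
Proof.
  destruct k; intro H; simpl; auto.
  rewrite sum_zeros by (intros; apply H; lia). ring.
Qed.

Ltac eqbs := repeat match goal with |- context[Nat.eqb ?a ?b] => destruct (Nat.eqb_spec a b); try lia end.

Lemma trans_low p q r m k : (m < k)%nat -> trans p q r m (S k) = 0.
Proof. intro H. destruct m; unfold trans; eqbs; auto. Qed.
Lemma trans_up p q r k : trans p q r k (S k) = match k with O => 1 | S _ => p end.
Proof. destruct k; unfold trans; eqbs; auto. Qed.
Lemma trans_diag p q r k : trans p q r (S k) (S k) = r.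
Proof. unfold trans; eqbs; auto. Qed.
Lemma trans_down p q r k : trans p q r (S (S k)) (S k) = q.
Proof. unfold trans; eqbs; auto. Qed.

Lemma mu_step0 p q r t : mu p q r (S t) 0 = mu p q r t 1 * q.
Proof. simpl. unfold trans; simpl. ring. Qed.

Lemma mu_stepS p q r t k : mu p q r (S t) (S k) =
  mu p q r t k * trans p q r k (S k) + mu p q r t (S k) * r + mu p q r t (S (S k)) * q.
Proof.
  change (mu p q r (S t) (S k)) with (sum_f_R0 (fun m => mu p q r t m * trans p q r m (S k)) (S (S k))).
  rewrite !tech5. rewrite sum_prefix.
  rewrite trans_diag, trans_down. ring.
  intros m Hm. rewrite trans_low by auto. ring.
Qed.

Section Link.
Variables p q r : R.
Hypotheses (hp : 0 < p) (hq : 0 < q) (hr : 0 < r) (hsum : p + q + r = 1) (hqp : p < q).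

Definition phi0 (n : nat) : R := if Nat.eqb n 0 then / nu p q 0 else 0.

Lemma mu_phi t n : mu p q r t n = nu p q n * Pit p q r t phi0 n.
Proof.
  pose proof (nu_pos p q r hp hq hr hsum hqp 0).
  revert n; induction t; intro n.
  - simpl. unfold phi0. destruct n; simpl. field. lra. ring.
  - destruct n.
    + rewrite mu_step0, IHt. simpl Pit. simpl Pop.
      rewrite <- (nu_rec0 p q r hp hq hr hsum hqp). ring.
    + rewrite mu_stepS, !IHt. simpl Pit. simpl Pop. rewrite trans_up.
      pose proof (nu_rec p q r hp hq hr hsum hqp n) as E.
      destruct n.
      * rewrite <- (nu_rec0 p q r hp hq hr hsum hqp). 
        replace (nu p q 2 * Pit p q r t phi0 2%nat * q) with ((nu p q 2 * q) * Pit p q r t phi0 2%nat) by ring.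
        rewrite E. ring.
      * replace (nu p q (S (S (S n))) * Pit p q r t phi0 (S (S (S n))) * q)
          with ((nu p q (S (S (S n))) * q) * Pit p q r t phi0 (S (S (S n)))) by ring.
        rewrite E. replace (nu p q (S n) * Pit p q r t phi0 (S n) * p) with ((nu p q (S n) * p) * Pit p q r t phi0 (S n)) by ring. rewrite <- (nu_rec p q r hp hq hr hsum hqp n). ring.
Qed.

End Link.

Lemma q_ge_r p q r : 0 < p -> 0 < q -> 0 < r -> p + q + r = 1 -> p < q ->
  q / (q + r) > r + 2 * p -> r <= q.
Proof.
  intros hp hq hr hs hqp H.
  assert (H2 : q > (r + 2 * p) * (q + r)).
  { apply (Rmult_gt_compat_r (q + r)) in H; [|lra].
    unfold Rdiv in H. rewrite Rmult_assoc, Rinv_l in H by lra. lra. }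
  destruct (Rle_dec r q); auto.
  exfalso. replace p with (1 - q - r) in H2 by lra.
  nra.
Qed.

Lemma constB_simpl p q r s : 0 < p -> 0 < q -> 0 < r -> p + q + r = 1 -> p < q ->
  0 < s -> s < 1 -> p = q * s * s ->
  (p / (q + r) * (1 + 1 / (q * s - p))) /
  ((1 - s * (r + (1 + q - p)) / (2 * (q + r))) *
   (1 + s * (r - (1 + q - p)) / (2 * (q + r))))
  = s * (q * s * (1 - s) + 1) / ((1 - s) * (1 - s) * (q + r - s * q)).
Proof.
  intros hp hq hr hs hqp hs0 hs1 Hp.
  assert (E1 : r + (1 + q - p) = 2 * (q + r)) by lra.
  assert (E2 : r - (1 + q - p) = - 2 * q) by lra.
  rewrite E1, E2.
  assert (Hu : q + r - s * q > 0) by nra.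
  assert (Hd : q * s - p = q * s * (1 - s)) by (rewrite Hp; ring).
  rewrite Hd.
  rewrite Hp. field. repeat split; try nra.
Qed.

Lemma frac_le A B C D : 0 < B -> 0 < D -> A * D <= C * B -> A / B <= C / D.
Proof.
  intros HB HD H. unfold Rdiv.
  apply (Rmult_le_reg_r (B * D)); [nra|].
  replace (A * / B * (B * D)) with (A * D) by (field; lra).
  replace (C * / D * (B * D)) with (C * B) by (field; lra). auto.
Qed.

Lemma B_ineq q r s : 0 < q -> 0 < r -> 0 < s -> s < 1 -> r <= q -> q + r <= 1 ->
  q * s * s / (q * (q - q * s * s) * (1 + q / (q + r)) ^ 2)
  <= (s * (q * s * (1 - s) + 1) / ((1 - s) * (1 - s) * (q + r - s * q))) ^ 2.
Proof.
  intros hq hr hs0 hs1 hrq hu.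
  set (u := q + r) in *.
  assert (Hu0 : 0 < u) by (unfold u; lra).
  assert (Hus : 0 < u - s * q) by (unfold u; nra).
  assert (E1 : q * s * s / (q * (q - q * s * s) * (1 + q / u) ^ 2)
     = (s * s * (u * u)) / (q * (1 - s * s) * ((q + u) * (q + u)))).
  { assert (s * s < 1) by nra. assert (q * s * s < q) by nra. field. repeat split; apply Rgt_not_eq; lra. }
  assert (E2 : (s * (q * s * (1 - s) + 1) / ((1 - s) * (1 - s) * (u - s * q))) ^ 2
     = (s * s * ((q * s * (1 - s) + 1) * (q * s * (1 - s) + 1))) /
       (((1 - s) * (1 - s) * (u - s * q)) * ((1 - s) * (1 - s) * (u - s * q)))).
  { field. split; apply Rgt_not_eq; lra. }
  rewrite E1, E2. apply frac_le.
  - assert (0 < 1 - s * s) by nra. assert (0 < (q + u) * (q + u)) by nra.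
    apply Rmult_lt_0_compat; [|lra]. apply Rmult_lt_0_compat; lra.
  - assert (0 < (1 - s) * (1 - s) * (u - s * q)).
    { apply Rmult_lt_0_compat; [|lra]. nra. }
    nra.
  - assert (Hk : 1 <= (q * s * (1 - s) + 1) * (q * s * (1 - s) + 1)).
    { assert (0 <= q * s * (1 - s)). { apply Rmult_le_pos; [nra|lra]. } nra. }
    assert (Hq2 : 2 * q >= u) by (unfold u; lra).
    assert (Hu1 : u <= 1) by lra.
    assert (P1 : u * u * u * u <= q * ((q + u) * (q + u))).
    { assert (u * u * u <= u * u * u * 1) by lra.
      assert (u * u * u * u <= u * u * u) by (assert (0 <= u*u*u) by (apply Rmult_le_pos; nra); nra).
      assert (9 / 8 * (u * u * u) <= q * ((q + u) * (q + u))).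
      { assert (q + u >= 3/2 * u) by lra.
        assert ((q + u) * (q + u) >= 9/4 * (u * u)) by nra.
        assert (q * ((q+u)*(q+u)) >= u / 2 * (9/4 * (u * u))) by nra. nra. }
      assert (0 <= u * u * u) by (apply Rmult_le_pos; nra). nra. }
    assert (P2 : (1 - s) * (1 - s) * ((1 - s) * (1 - s)) <= 1 - s * s).
    { set (a := 1 - s). assert (0 < a) by (unfold a; lra). assert (a <= 1) by (unfold a; lra).
      assert (a * a <= a) by nra. assert (0 <= a * a) by nra.
      assert (a * a * (a * a) <= a * a) by nra.
      assert (a <= 1 - s * s) by (unfold a; nra). lra. }
    assert (P3 : (u - s * q) * (u - s * q) <= u * u).
    { assert (0 < s * q) by nra. apply Rmult_le_compat; lra. }
    assert (HS2 : 0 < s * s) by nra.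
    set (K := (q * s * (1 - s) + 1) * (q * s * (1 - s) + 1)) in *.
    set (X := (1 - s) * (1 - s) * ((1 - s) * (1 - s))) in *.
    assert (HX : 0 <= X) by (unfold X; apply Rmult_le_pos; apply Rle_0_sqr).
    replace (s * s * (u * u) * ((1 - s) * (1 - s) * (u - s * q) * ((1 - s) * (1 - s) * (u - s * q))))
      with (s * s * ((u * u) * X * ((u - s * q) * (u - s * q)))) by (unfold X; ring).
    replace (s * s * K * (q * (1 - s * s) * ((q + u) * (q + u))))
      with (s * s * (K * (1 - s * s) * (q * ((q + u) * (q + u))))) by ring.
    apply Rmult_le_compat_l; [lra|].
    assert (A1 : u * u * X * ((u - s * q) * (u - s * q)) <= u * u * (1 - s * s) * (u * u)).
    { assert (0 <= u * u) by nra.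
      assert (0 <= (u - s * q) * (u - s * q)) by nra.
      apply Rmult_le_compat; try nra. }
    assert (A2 : u * u * (1 - s * s) * (u * u) <= (1 - s * s) * (q * ((q + u) * (q + u)))).
    { assert (0 <= 1 - s * s) by nra. 
      replace (u * u * (1 - s * s) * (u * u)) with ((1 - s * s) * (u * u * u * u)) by ring.
      apply Rmult_le_compat_l; auto. }
    assert (A3 : (1 - s * s) * (q * ((q + u) * (q + u))) <= K * (1 - s * s) * (q * ((q + u) * (q + u)))).
    { assert (0 <= (1 - s * s) * (q * ((q + u) * (q + u)))).
      { apply Rmult_le_pos; [nra|]. apply Rmult_le_pos; nra. }
      nra. }
    lra.
Qed.

Lemma constB_props p q r : 0 < p -> 0 < q -> 0 < r -> p + q + r = 1 -> p < q ->
  q / (q + r) > r + 2 * sqrt (p * q) ->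
  0 <= constB p q r /\ p / (q * (q - p) * (1 + q / (q + r)) ^ 2) <= constB p q r ^ 2.
Proof.
  intros hp hq hr hs hqp hgap.
  set (s := sqrt (p / q)).
  assert (Hpq : 0 < p / q) by (apply Rdiv_lt_0_compat; lra).
  assert (Hss : s * s = p / q) by (apply sqrt_sqrt; lra).
  assert (Hs0 : 0 < s) by (apply sqrt_lt_R0; lra).
  assert (Hp : p = q * s * s) by (rewrite Rmult_assoc, Hss; field; lra).
  assert (Hs1 : s < 1).
  { assert (s * s < 1). { rewrite Hss. apply (Rmult_lt_reg_r q); [lra|]. unfold Rdiv. rewrite Rmult_assoc, Rinv_l; lra. }
    nra. }
  assert (Hsq : sqrt (p * q) = q * s).
  { rewrite <- (sqrt_Rsqr (q * s)) by nra. f_equal. unfold Rsqr. rewrite Hp. ring. }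
  assert (HB : constB p q r = s * (q * s * (1 - s) + 1) / ((1 - s) * (1 - s) * (q + r - s * q))).
  { unfold constB. rewrite Hsq. fold s. apply constB_simpl; auto. }
  rewrite HB. split.
  - unfold Rdiv. apply Rmult_le_pos.
    + apply Rmult_le_pos; [lra|]. assert (0 <= q * s * (1 - s)) by (apply Rmult_le_pos; nra). lra.
    + left. apply Rinv_0_lt_compat.
      assert (0 < q + r - s * q) by nra. assert (0 < (1 - s) * (1 - s)) by nra. nra.
  - assert (Hrq : r <= q).
    { apply (q_ge_r p q r); auto. rewrite Hsq in hgap.
      assert (p <= q * s) by (rewrite Hp; nra). lra. }
    rewrite Hp at 1. replace (q - p) with (q - q * s * s) by (rewrite Hp; ring).
    apply B_ineq; auto; lra.
Qed.

Lemma Pop_scal p q r u c n : Pop p q r (fun m => c * u m) n = c * Pop p q r u n.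
Proof. destruct n; simpl; ring. Qed.

Lemma Pit_ext p q r t u v (E : forall n, u n = v n) n : Pit p q r t u n = Pit p q r t v n.
Proof. revert n; induction t; intro n; simpl; auto. apply Pop_ext. auto. Qed.

Lemma Pit_lin p q r t u v c n :
  Pit p q r t (fun m => u m + c * v m) n = Pit p q r t u n + c * Pit p q r t v n.
Proof.
  revert n; induction t; intro n; simpl; auto.
  rewrite (Pop_ext p q r _ (fun m => Pit p q r t u m + c * Pit p q r t v m) IHt). apply Pop_lin.
Qed.

Lemma Pit_comm p q r t v n : Pit p q r t (Pop p q r v) n = Pop p q r (Pit p q r t v) n.
Proof.
  revert n; induction t; intro n; simpl; auto.
  apply Pop_ext. auto.
Qed.

Lemma bnd_scal c u : bnd u -> bnd (fun n => c * u n).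
Proof. intro H. apply (bnd_ext (fun n => 0 + c * u n)); [intro; ring|]. apply bnd_lin; auto using bnd_const. Qed.

Lemma pow_m1 n : (-1) ^ n = 1 \/ (-1) ^ n = -1.
Proof. induction n; simpl; [left; ring|]. destruct IHn as [H|H]; rewrite H; [right|left]; ring. Qed.

Section Main.
Variables p q r : R.
Hypotheses (hp : 0 < p) (hq : 0 < q) (hr : 0 < r) (hsum : p + q + r = 1) (hqp : p < q).
Hypothesis (hgap : q / (q + r) > r + 2 * sqrt (p * q)).

Let ex_ip' := ex_ip p q r hp hq hr hsum hqp.
Let ip_lin_l' := ip_lin_l p q r hp hq hr hsum hqp.
Let ip_lin_r' := ip_lin_r p q r hp hq hr hsum hqp.
Let ip_pos' := ip_pos p q r hp hq hr hsum hqp.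
Let ip_first' := ip_first p q r hp hq hr hsum hqp.
Let Pop_adj' := Pop_adj p q r hp hq hr hsum hqp.
Let bnd_Pop' := bnd_Pop p q r hp hq hr hsum.
Let W_contract' := W_contract p q r hp hq hr hsum hqp hgap.
Let W_Pop' := W_Pop p q r hp hq hr hsum hqp.
Let W_lin' := W_lin p q r hp hq hr hsum hqp.
Let ip_expand' := ip_expand p q r hp hq hr hsum hqp.
Let nu_pos' := nu_pos p q r hp hq hr hsum hqp.
Let ip_oo' := ip_oo p q r hp hq hr hsum hqp.
Let ip_one_ff' := ip_one_ff p q r hp hq hr hsum hqp.
Let bnd_ff' := bnd_ff q r hq hr.

Lemma Pit_one t n : Pit p q r t oneF n = 1.
Proof.
  revert n; induction t; intro n; simpl; auto.
  rewrite (Pop_ext p q r _ oneF IHt). apply (Pop_one p q r hsum).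
Qed.

Lemma Pit_ff t n : Pit p q r t (ff q r) n = (- aa q r) ^ t * ff q r n.
Proof.
  revert n; induction t; intro n; simpl. ring.
  rewrite (Pop_ext p q r _ (fun m => (- aa q r) ^ t * ff q r m) IHt).
  rewrite Pop_scal, (Pop_ff p q r hq hr hsum). ring.
Qed.

Lemma bnd_Pit t u : bnd u -> bnd (Pit p q r t u).
Proof. intro H; induction t; simpl; auto. Qed.

Lemma W_Pit t u : W p q r u -> W p q r (Pit p q r t u).
Proof. intro H; induction t; simpl; auto. Qed.

Lemma Pit_contract t u : W p q r u ->
  ip p q (Pit p q r t u) (Pit p q r t u) <= (bb p q r) ^ (2 * t) * ip p q u u.
Proof.
  intro H. induction t. simpl. lra.
  simpl Pit. eapply Rle_trans. apply W_contract'. apply W_Pit; auto.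
  replace (2 * S t)%nat with (2 + 2 * t)%nat by lia. rewrite pow_add.
  pose proof (bb_bounds p q r hp hq hr hsum hqp) as [H1 H2].
  assert (0 <= bb p q r ^ 2) by (apply pow_le; lra). nra.
Qed.

Lemma Pit_adj t u v : bnd u -> bnd v -> ip p q (Pit p q r t u) v = ip p q u (Pit p q r t v).
Proof.
  intros Hu. revert v; induction t; intros v Hv; simpl; auto.
  rewrite Pop_adj' by (auto; apply bnd_Pit; auto).
  rewrite IHt by (apply bnd_Pop'; auto).
  apply ip_ext; intro n; auto. apply Pit_comm.
Qed.

Definition gg (n : nat) : R := (-1) ^ n.

Lemma bnd_gg : bnd gg.
Proof. exists 1. intro n. unfold gg. rewrite pow_1_abs. lra. Qed.

Lemma gg_ff n : gg n * ff q r n = (aa q r) ^ n.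
Proof. unfold gg, ff. rewrite <- Rpow_mult_distr. f_equal. ring. Qed.

Lemma ff_ff n : ff q r n * ff q r n = (aa q r * aa q r) ^ n.
Proof. unfold ff. rewrite <- Rpow_mult_distr. f_equal. ring. Qed.

Lemma aa_bounds : 0 < aa q r < 1.
Proof. split; [apply aa_pos|apply aa_lt1]; auto. Qed.

Lemma ip_gg_ff : ip p q gg (ff q r) = (1 + aa q r / (q - p * aa q r)) / rho p q.
Proof.
  pose proof aa_bounds.
  unfold ip. rewrite (Series_ext _ (fun n => nu p q n * (aa q r) ^ n)).
  apply is_series_unique. apply (nu_series_x p q r); auto; lra.
  intro n. rewrite <- gg_ff. ring.
Qed.

Lemma ip_ff_ff : ip p q (ff q r) (ff q r) = (1 + (aa q r * aa q r) / (q - p * (aa q r * aa q r))) / rho p q.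
Proof.
  pose proof aa_bounds.
  unfold ip. rewrite (Series_ext _ (fun n => nu p q n * (aa q r * aa q r) ^ n)).
  apply is_series_unique. apply (nu_series_x p q r); auto. split; nra.
  intro n. rewrite <- ff_ff. ring.
Qed.

Lemma FF_pos : 0 < ip p q (ff q r) (ff q r).
Proof.
  pose proof (ip_first' (ff q r) bnd_ff').
  assert (E : ff q r 0%nat = 1) by (unfold ff; simpl; ring). rewrite E in H.
  pose proof (nu_pos' 0). lra.
Qed.

Definition c0 := ip p q gg oneF.
Definition c1 := ip p q gg (ff q r) / ip p q (ff q r) (ff q r).

Lemma c1_val : c1 = 2 * constA p q r.
Proof.
  unfold c1. rewrite ip_gg_ff, ip_ff_ff. pose proof (rho_pos p q r hp hq hr hsum hqp).
  pose proof aa_bounds.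
  assert (q - p * aa q r > 0) by nra.
  assert (q - p * (aa q r * aa q r) > 0) by nra.
  unfold constA, aa in *.
  assert (1 - 2 * p > 0) by lra.
  assert (1 + q - p > 0) by lra.
  assert (Hr : r = 1 - p - q) by lra. rewrite Hr in *.
  assert (1 - p > q) by lra. assert (q * q > 0) by nra.
  assert (A4 : q * ((1 - p) * (1 - p) - p * q) > 0).
  { apply Rmult_gt_0_compat; [lra|]. assert ((1-p)*(1-p) > q * q) by nra. nra. }
  assert (A6 : q * ((1 - p) - p) > 0) by (apply Rmult_gt_0_compat; lra).
  field. repeat split; apply Rgt_not_eq; lra.
Qed.


Definition hh (n : nat) : R := (gg n + (- c0) * oneF n) + (- c1) * ff q r n.

Lemma bnd_hh : bnd hh.
Proof. unfold hh. apply bnd_lin; [apply bnd_lin|]; auto using bnd_gg, bnd_one. Qed.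

Lemma W_hh : W p q r hh.
Proof.
  pose proof FF_pos.
  assert (Hg1 : bnd (fun n => gg n + - c0 * oneF n)) by (apply bnd_lin; auto using bnd_gg, bnd_one).
  split; [apply bnd_hh|split].
  - unfold hh. rewrite ip_lin_l'; auto using bnd_one. rewrite ip_lin_l'; auto using bnd_one, bnd_gg.
    rewrite ip_oo', (ip_sym p q (ff q r)), ip_one_ff'. unfold c0. ring.
  - unfold hh. rewrite ip_lin_l'; auto. rewrite ip_lin_l'; auto using bnd_one, bnd_gg.
    rewrite ip_one_ff'. unfold c1. field. lra.
Qed.

Lemma Pit_gg t : Pit p q r t gg 0%nat = c0 + c1 * (- aa q r) ^ t + Pit p q r t hh 0%nat.
Proof.
  rewrite (Pit_ext p q r t gg (fun n => (hh n + c0 * oneF n) + c1 * ff q r n)).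
  2:{ intro n. unfold hh. ring. }
  rewrite Pit_lin, Pit_lin, Pit_one, Pit_ff. unfold ff. simpl. ring.
Qed.

Definition h2 (n : nat) : R :=
  gg n + (- ((aa q r - 1) / (aa q r + 1))) * oneF n + (- (2 / (1 + aa q r))) * ff q r n.

Lemma bnd_h2 : bnd h2.
Proof. unfold h2. apply bnd_lin; [apply bnd_lin|]; auto using bnd_gg, bnd_one. Qed.

Lemma hh_le_h2 : ip p q hh hh <= ip p q h2 h2.
Proof.
  pose proof W_hh as [Hb [H1 H2]].
  set (d0 := c0 - (aa q r - 1) / (aa q r + 1)).
  set (d1 := c1 - 2 / (1 + aa q r)).
  set (k := fun n => d0 * oneF n + d1 * ff q r n).
  assert (Hk : bnd k) by (apply bnd_lin; [apply bnd_scal, bnd_one| auto]).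
  rewrite (ip_ext p q h2 (fun n => hh n + 1 * k n) h2 (fun n => hh n + 1 * k n)).
  2,3: intro n; unfold h2, hh, k, d0, d1; ring.
  rewrite ip_expand'; auto.
  assert (Hhk : ip p q hh k = 0).
  { unfold k. rewrite ip_lin_r'; [|apply bnd_scal, bnd_one|auto|auto].
    rewrite ip_scal_r, H1, H2. ring. }
  rewrite Hhk, (ip_sym p q k hh), Hhk. pose proof (ip_pos' k Hk). lra.
Qed.

Lemma h2_sq n : h2 n * h2 n <= 4 / ((1 + aa q r) * (1 + aa q r)) /\
  (n = 0%nat \/ n = 1%nat -> h2 n = 0).
Proof.
  pose proof aa_bounds as [A0 A1].
  assert (Hff : ff q r n = gg n * aa q r ^ n).
  { unfold ff, gg. rewrite <- Rpow_mult_distr. f_equal. ring. }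
  assert (E : h2 n = (gg n * (1 + aa q r) - (aa q r - 1) - 2 * gg n * aa q r ^ n) / (1 + aa q r)).
  { unfold h2. rewrite Hff. unfold oneF. field. lra. }
  split.
  - rewrite E. set (N := gg n * (1 + aa q r) - (aa q r - 1) - 2 * gg n * aa q r ^ n).
    assert (HN : N * N <= 4).
    { unfold N. destruct n.
      + unfold gg. simpl. nra.
      + assert (0 <= aa q r ^ n) by (apply pow_le; lra).
        assert (aa q r ^ n <= 1).
        { clear -A0 A1. induction n; simpl; [lra|]. assert (0 <= aa q r ^ n) by (apply pow_le; lra). nra. }
        assert (Hp : 0 <= aa q r ^ S n <= aa q r) by (simpl; split; nra).
        destruct (pow_m1 (S n)) as [G|G]; unfold gg; rewrite G; nra. }
    replace (N / (1 + aa q r) * (N / (1 + aa q r))) with (N * N / ((1 + aa q r) * (1 + aa q r))) by (field; lra).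
    apply frac_le; nra.
  - intros [-> | ->]; unfold h2, gg, ff, oneF; simpl; field; lra.
Qed.

Lemma h2_norm : ip p q h2 h2 <= 4 / ((1 + aa q r) * (1 + aa q r)) * (1 - nu p q 0 - nu p q 1).
Proof.
  set (K := 4 / ((1 + aa q r) * (1 + aa q r))).
  assert (HK : 0 <= K) by (unfold K; pose proof aa_bounds; apply Rlt_le, Rdiv_lt_0_compat; nra).
  assert (Hex := ex_ip' h2 h2 bnd_h2 bnd_h2).
  unfold ip. rewrite (Series_incr_1 _ Hex).
  assert (Hex1 := proj1 (ex_series_incr_1 _) Hex). simpl in Hex1.
  rewrite (Series_incr_1 _ Hex1).
  rewrite (proj2 (h2_sq 0) (or_introl eq_refl)), (proj2 (h2_sq 1) (or_intror eq_refl)).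
  assert (HexN := ex_nu p q r hp hq hr hsum hqp).
  assert (HexN1 := proj1 (ex_series_incr_1 _) HexN). simpl in HexN1.
  assert (HexN2 := proj1 (ex_series_incr_1 _) HexN1). simpl in HexN2.
  assert (EN : Series (fun k => nu p q (S (S k))) = 1 - nu p q 0 - nu p q 1).
  { rewrite <- (Series_nu p q r hp hq hr hsum hqp).
    rewrite (Series_incr_1 _ HexN). rewrite (Series_incr_1 _ HexN1). ring. }
  assert (L : Series (fun k => nu p q (S (S k)) * h2 (S (S k)) * h2 (S (S k)))
     <= Series (fun k => K * nu p q (S (S k)))).
  { apply Series_le. intro n. pose proof (nu_pos' (S (S n))). pose proof (proj1 (h2_sq (S (S n)))).
    split. replace (nu p q (S (S n)) * h2 (S (S n)) * h2 (S (S n))) with (nu p q (S (S n)) * (h2 (S (S n)) * h2 (S (S n)))) by ring.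
    apply Rmult_le_pos; [lra|apply Rle_0_sqr].
    fold K in H0. nra.
    apply exR_scal; auto. }
  rewrite Series_scal_l, EN in L. fold K. lra.
Qed.

Lemma nu01 : 1 - nu p q 0 - nu p q 1 = nu p q 0 * (p / (q * (q - p))).
Proof.
  unfold nu. rewrite (rho_val p q r hp hq hr hsum hqp). simpl. field. repeat split; apply Rgt_not_eq; lra.
Qed.

Lemma hh_norm : ip p q hh hh <= 4 * (constB p q r) ^ 2 * nu p q 0.
Proof.
  eapply Rle_trans; [apply hh_le_h2|]. eapply Rle_trans; [apply h2_norm|].
  rewrite nu01. destruct (constB_props p q r hp hq hr hsum hqp hgap) as [_ HB].
  fold (aa q r) in HB. pose proof (nu_pos' 0). pose proof aa_bounds.
  replace (4 / ((1 + aa q r) * (1 + aa q r)) * (nu p q 0 * (p / (q * (q - p)))))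
    with (4 * nu p q 0 * (p / (q * (q - p) * (1 + aa q r) ^ 2))) by (field; repeat split; apply Rgt_not_eq; nra).
  replace (4 * constB p q r ^ 2 * nu p q 0) with (4 * nu p q 0 * constB p q r ^ 2) by ring.
  apply Rmult_le_compat_l; [lra|auto].
Qed.

Lemma bnd_phi0 : bnd (phi0 p q).
Proof.
  exists (/ nu p q 0). intro n. unfold phi0. pose proof (nu_pos' 0).
  assert (0 < / nu p q 0) by (apply Rinv_0_lt_compat; lra).
  destruct (Nat.eqb n 0); [rewrite Rabs_pos_eq; lra| rewrite Rabs_R0; lra].
Qed.

Lemma ip_phi0 v : bnd v -> ip p q (phi0 p q) v = v 0%nat.
Proof.
  intro Hv. unfold ip. rewrite (Series_incr_1 _ (ex_ip' _ _ bnd_phi0 Hv)).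
  rewrite (Series_ext _ (fun _ => 0)). rewrite Series_zero. unfold phi0. simpl.
  pose proof (nu_pos' 0). field. lra.
  intro n. unfold phi0. simpl. ring.
Qed.

Lemma Pit_hh_bound t : Rabs (Pit p q r t hh 0%nat) <= 2 * constB p q r * (bb p q r) ^ t.
Proof.
  set (X := Pit p q r t hh 0%nat).
  pose proof (ip_first' _ (bnd_Pit t hh bnd_hh)) as H1. fold X in H1.
  pose proof (Pit_contract t hh W_hh) as H2.
  pose proof hh_norm as H3.
  pose proof (nu_pos' 0) as Hn.
  destruct (constB_props p q r hp hq hr hsum hqp hgap) as [HB _].
  pose proof (bb_bounds p q r hp hq hr hsum hqp) as [Hb0 Hb1].
  assert (Hbt : 0 <= bb p q r ^ t) by (apply pow_le; lra).
  assert (Hb2 : bb p q r ^ (2 * t) = bb p q r ^ t * bb p q r ^ t).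
  { replace (2 * t)%nat with (t + t)%nat by lia. apply pow_add. }
  rewrite Hb2 in H2.
  assert (H4 : nu p q 0 * (X * X) <= nu p q 0 * ((2 * constB p q r * bb p q r ^ t) * (2 * constB p q r * bb p q r ^ t))).
  { assert (0 <= bb p q r ^ t * bb p q r ^ t) by nra.
    assert (bb p q r ^ t * bb p q r ^ t * ip p q hh hh <= bb p q r ^ t * bb p q r ^ t * (4 * constB p q r ^ 2 * nu p q 0))
      by (apply Rmult_le_compat_l; auto).
    simpl in H0. nra. }
  apply Rmult_le_reg_l in H4; auto.
  assert (0 <= 2 * constB p q r * bb p q r ^ t) by nra.
  rewrite <- (Rabs_pos_eq (2 * constB p q r * bb p q r ^ t)) by auto.
  apply (Rsqr_le_abs_0 X). unfold Rsqr. auto.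
Qed.

Lemma main_bound t :
  tv_dist (nu p q) (mu p q r t) >=
      constA p q r * (q / (q + r)) ^ t - constB p q r * (r + 2 * sqrt (p * q)) ^ t.
Proof.
  set (phi := Pit p q r t (phi0 p q)).
  assert (Hphi : bnd phi) by (apply bnd_Pit, bnd_phi0).
  set (u := fun n => oneF n + (-1) * phi n).
  assert (Hu : bnd u) by (apply bnd_lin; auto using bnd_one).
  set (a := fun n => nu p q n * u n * gg n).
  assert (Ea : forall n, Rabs (nu p q n - mu p q r t n) = Rabs (a n)).
  { intro n. unfold a, u, oneF. rewrite (mu_phi p q r hp hq hr hsum hqp). fold phi.
    rewrite Rabs_mult. unfold gg. rewrite pow_1_abs. rewrite Rmult_1_r. f_equal. ring. }
  unfold tv_dist. rewrite (Series_ext _ _ Ea).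
  assert (Hex : ex_series (fun n => Rabs (a n))).
  { destruct Hu as [M1 HM1]. destruct bnd_gg as [M2 HM2].
    apply (ex_nu_bound p q r hp hq hr hsum hqp _ (M1 * M2)). intro n. rewrite Rabs_Rabsolu.
    apply abs3; auto. left; auto. }
  pose proof (Series_Rabs a Hex) as HS.
  assert (ES : Series a = c0 - Pit p q r t gg 0%nat).
  { change (Series a) with (ip p q u gg). unfold u. rewrite ip_lin_l'; auto using bnd_one, bnd_gg.
    rewrite (ip_sym p q oneF gg). fold c0. unfold phi. rewrite Pit_adj; auto using bnd_phi0, bnd_gg.
    rewrite ip_phi0. ring. apply bnd_Pit, bnd_gg. }
  rewrite ES, Pit_gg in HS.
  replace (c0 - (c0 + c1 * (- aa q r) ^ t + Pit p q r t hh 0%nat))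
    with (- (c1 * (- aa q r) ^ t + Pit p q r t hh 0%nat)) in HS by ring.
  rewrite Rabs_Ropp in HS.
  pose proof (Rabs_triang_inv (c1 * (- aa q r) ^ t) (- Pit p q r t hh 0%nat)) as HT.
  replace (c1 * (- aa q r) ^ t - - Pit p q r t hh 0%nat) with (c1 * (- aa q r) ^ t + Pit p q r t hh 0%nat) in HT by ring.
  rewrite Rabs_Ropp in HT.
  assert (HA : Rabs (c1 * (- aa q r) ^ t) >= 2 * constA p q r * (q / (q + r)) ^ t).
  { rewrite Rabs_mult, <- RPow_abs, Rabs_Ropp. pose proof aa_bounds.
    rewrite (Rabs_pos_eq (aa q r)) by lra. rewrite c1_val. unfold aa.
    assert (0 <= (q / (q + r)) ^ t) by (apply pow_le; unfold aa in *; lra).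
    pose proof (Rle_abs (2 * constA p q r)). nra. }
  pose proof (Pit_hh_bound t) as HB. unfold bb in HB.
  lra.
Qed.

End Main.

Theorem mainTheorem2 (p q r : R)
  (hp : 0 < p) (hq : 0 < q) (hr : 0 < r) (hsum : p + q + r = 1) (hqp : p < q)
  (hgap : q / (q + r) > r + 2 * sqrt (p * q)) :
  exists T : nat, forall t : nat, (T <= t)%nat ->
    tv_dist (nu p q) (mu p q r t) >=
      constA p q r * (q / (q + r)) ^ t - constB p q r * (r + 2 * sqrt (p * q)) ^ t.
Proof.
  exists 0%nat. intros t _. apply main_bound; auto.
Qed.
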